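(* Let $R$ and $Q$ be finite sequences of formulas and $S=R\cdot Q$ their concatenation. For all models $I,J$: $I\le_{\emptyset S}J$ holds if and only if $I\le_{\emptyset Q}J$ and (either $J\not\le_{\emptyset Q}I$ or $I\le_{\emptyset R}J$).
   Context: Propositional models are truth assignments over a finite set of variables; a formula used where a set of models is expected stands for its set of models. A doxastic state is a sequence $C=[C(0),\ldots,C(k)]$ of nonempty, pairwise disjoint sets of models covering all models; $I\le_C J$ iff $I\in C(i)$, $J\in C(j)$ with $i\le j$. The flat doxastic state $\emptyset$ is $[\text{all models}]$. Lexicographic revision: $C\,\mathrm{lex}(A)=[C(0)\cap A,\ldots,C(k)\cap A,C(0)\setminus A,\ldots,C(k)\setminus A]$, empty sets discarded. For a sequence of formulas $T=[T_1,\ldots,T_n]$, $\emptyset T$ denotes $\emptyset$ revised lexicographically by $T_1$, then $T_2$, ..., then $T_n$ ($\emptyset[\,]=\emptyset$). *)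

(* Defs.v *)
From mathcomp Require Import all_boot.
Set Implicit Arguments. Unset Strict Implicit. Unset Printing Implicit Defensive.

Inductive form (V : Type) : Type :=
| FVar of V | FTrue | FFalse
| FNot of form V | FAnd of form V & form V | FOr of form V & form V
| FImp of form V & form V.

Section Doxastic.
Variable V : finType.

Definition model := {ffun V -> bool}.

Fixpoint sat (I : model) (F : form V) : bool :=
  match F with
  | FVar v => I v
  | FTrue => true
  | FFalse => false
  | FNot G => ~~ sat I G
  | FAnd G H => sat I G && sat I H
  | FOr G H => sat I G || sat I H
  | FImp G H => sat I G ==> sat I H
  end.

Definition mods (F : form V) : {set model} := [set I | sat I F].

(* A doxastic state: a sequence of classes (nonempty, disjoint, covering,
   by construction from the flat state). *)
Notation doxstate := (seq {set model}).

Definition flat : doxstate := [:: [set: model]].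

Definition lex (C : doxstate) (A : form V) : doxstate :=
  filter (fun X => X != set0)
    ([seq X :&: mods A | X <- C] ++ [seq X :\: mods A | X <- C]).

(* emptyset T : the flat state revised by T_1, ..., T_n in order. *)
Definition revise_seq (T : seq (form V)) : doxstate := foldl lex flat T.

Definition level (C : doxstate) (I : model) : nat := find (fun X : {set model} => I \in X) C.

Definition dle (C : doxstate) (I J : model) : bool :=
  has (fun X : {set model} => I \in X) C && has (fun X : {set model} => J \in X) C &&
  (level C I <= level C J).

End Doxastic.

(* Main.v *)
Require Import Defs.
From mathcomp Require Import all_boot.
From mathcomp Require Import zify.

Lemma find_filter_le (T : Type) (p p' q : pred T) (s : seq T) :
  (forall x, p x -> q x) -> (forall x, p' x -> q x) ->
  (find p (filter q s) <= find p' (filter q s)) = (find p s <= find p' s).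
Proof.
move=> hp hp'; elim: s => [|x s IH] //=.
case qx: (q x) => /=.
  case px: (p x) => //; case px': (p' x) => //.
have -> : p x = false by apply/negP => /hp; rewrite qx.
have -> : p' x = false by apply/negP => /hp'; rewrite qx.
by rewrite ltnS.
Qed.

Lemma has_filter_imp (T : Type) (p q : pred T) (s : seq T) :
  (forall x, p x -> q x) -> has p (filter q s) = has p s.
Proof.
move=> hp; elim: s => [|x s IH] //=.
case qx: (q x) => /=; first by rewrite IH.
have -> : p x = false by apply/negP => /hp; rewrite qx.
by [].
Qed.

Section S.
Variable V : finType.

Definition covers (C : seq {set model V}) := forall I : model V, has (fun X : {set model V} => I \in X) C.

Lemma has_lex C A I : has (fun X : {set model V} => I \in X) (lex C A) = has (fun X : {set model V} => I \in X) C.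
Proof.
rewrite /lex has_filter_imp; last by move=> X h; apply/set0Pn; exists I.
rewrite has_cat !has_map.
case hA: (I \in mods A).
- rewrite (@eq_has _ _ (fun X : {set model V} => I \in X)); last by move=> X /=; rewrite in_setI hA andbT.
  have -> : has (preim (fun X : {set model V} => X :\: mods A) (fun X : {set model V} => I \in X)) C = false.
    by rewrite (@eq_has _ _ pred0) ?has_pred0 // => X /=; rewrite in_setD hA.
  by rewrite orbF.
- have -> : has (preim (fun X : {set model V} => X :&: mods A) (fun X : {set model V} => I \in X)) C = false.
    by rewrite (@eq_has _ _ pred0) ?has_pred0 // => X /=; rewrite in_setI hA andbF.
  by apply: eq_has => X /=; rewrite in_setD hA /= ?andbT.
Qed.

Lemma covers_lex C A : covers C -> covers (lex C A).
Proof. by move=> h I; rewrite has_lex. Qed.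

Lemma covers_fold C (T : seq (form V)) : covers C -> covers (foldl (@lex V) C T).
Proof. elim: T C => [|a T IH] C h //=; apply: IH; exact: covers_lex. Qed.

Lemma covers_flat : covers (flat V).
Proof. by move=> I /=; rewrite in_setT. Qed.


Lemma dle_lex C (A : form V) (I J : model V) : covers C ->
  dle (lex C A) I J = (I \in mods A) && (J \notin mods A) ||
     ((I \in mods A) == (J \in mods A)) && dle C I J.
Proof.
move=> hC.
rewrite /dle !has_lex !hC /= /level.
rewrite /lex find_filter_le; last first.
  by move=> X h; apply/set0Pn; exists J.
  by move=> X h; apply/set0Pn; exists I.
rewrite !find_cat !has_map !find_map /= size_map.
have hI := hC I; have hJ := hC J.
have fI := has_find (fun X : {set model V} => I \in X) C; have fJ := has_find (fun X : {set model V} => J \in X) C.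
rewrite hI in fI; rewrite hJ in fJ.
have E1 : forall (K : model V) b, (K \in mods A) = b ->
  (has (preim (fun X : {set model V} => X :&: mods A) (fun X : {set model V} => K \in X)) C = b && has (fun X : {set model V} => K \in X) C) /\
  (find (preim (fun X : {set model V} => X :&: mods A) (fun X : {set model V} => K \in X)) C = if b then find (fun X : {set model V} => K \in X) C else size C) /\
  (find (preim (fun X : {set model V} => X :\: mods A) (fun X : {set model V} => K \in X)) C = if b then size C else find (fun X : {set model V} => K \in X) C).
  move=> K b hb; case: b hb => hb.
  - split; first by apply: eq_has => X /=; rewrite in_setI hb andbT.
    split; first by apply: eq_find => X /=; rewrite in_setI hb andbT.
    by rewrite (@eq_find _ _ pred0) ?find_pred0 // => X /=; rewrite in_setD hb /= ?andbT.
  - split; first by rewrite (@eq_has _ _ pred0) ?has_pred0 // => X /=; rewrite in_setI hb andbF.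
    split; first by rewrite (@eq_find _ _ pred0) ?find_pred0 // => X /=; rewrite in_setI hb andbF.
    by apply: eq_find => X /=; rewrite in_setD hb /= ?andbT.
have [a1 [a2 a3]] := E1 I _ erefl.
have [b1 [b2 b3]] := E1 J _ erefl.
rewrite a1 a2 a3 b1 b2 b3 hI hJ.
rewrite !andbT; move: fI fJ; set x := find _ C; set y := find _ C; move=> fI fJ.
case: (I \in mods A); case: (J \in mods A) => /=; lia.
Qed.

Lemma dle_covers C (I J : model V) : covers C -> dle C I J = (level C I <= level C J).
Proof. by move=> h; rewrite /dle !h. Qed.

Lemma dle_flat (I J : model V) : dle (flat V) I J.
Proof. rewrite dle_covers; last exact: covers_flat. rewrite /level /=. by have h := covers_flat; move: (h I) (h J); rewrite /= !orbF => -> ->. Qed.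

Lemma key C (Q : seq (form V)) (I J : model V) : covers C ->
  dle (foldl (@lex V) C Q) I J =
  dle (revise_seq Q) I J && (~~ dle (revise_seq Q) J I || dle C I J).
Proof.
move=> hC; rewrite /revise_seq.
elim/last_ind: Q I J => [|Q A IH] I J.
  by rewrite /= !dle_flat.
have c1 := @covers_fold C Q hC; have c2 := @covers_fold (flat V) Q covers_flat.
rewrite !foldl_rcons !dle_lex // IH.
by case: (I \in mods A); case: (J \in mods A).
Qed.

End S.

Theorem mainTheorem18 (V : finType) (R Q : seq (form V)) (I J : model V) :
  dle (revise_seq (R ++ Q)) I J =
  dle (revise_seq Q) I J &&
  (~~ dle (revise_seq Q) J I || dle (revise_seq R) I J).
Proof.
rewrite {1}/revise_seq foldl_cat; apply: key.
exact: covers_fold (covers_flat V).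
Qed.
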